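(* Let $K$ be a finite oriented simplicial complex and let $p,q$ be integers with $0\le p\le q$. Fix the bases of $C_m(K)$ given by the oriented $m$-simplices, and for integers $m\ge k\ge 0$ let $B_{m,k}=(b^{(m,k)}_{ij})$ be the matrix of $\partial_{m,k}\colon C_m(K)\to C_{m-k}(K)$ in these bases (rows indexed by $(m-k)$-simplices, columns by $m$-simplices). Then for every $q$-simplex $\sigma_j^{(q)}$, $$\deg_L^p(\sigma_j^{(q)})= -1+\sum_{q'=p}^{\dim K}\sum_k\min\Big(1,\sum_{i}|b_{ij}^{(q,h)}|\,|b^{(q',h')}_{ik}|\Big),$$ where $h=q-p$, $h'=q'-p$, $i$ runs over the $p$-simplices and $k$ over the $q'$-simplices of $K$.
   Context: $K$ is a finite abstract simplicial complex (finite family of nonempty finite vertex sets closed under nonempty subsets); a $q$-simplex has $q+1$ vertices; a face is a simplex of $K$ contained in a given simplex (a simplex is a face of itself); $\dim K$ is the maximal dimension of a simplex. Orientations: orderings of vertices modulo even permutations, $[v_{\eta(0)},\dots,v_{\eta(m)}]=\operatorname{sign}(\eta)[v_0,\dots,v_m]$; each simplex has a fixed orientation; $C_m(K)$ is the real vector space with basis the oriented $m$-simplices (opposite orientation = negative). Multi-parameter boundary operator: for $m\ge k\ge0$, $\partial_{m,k}\colon C_m(K)\to C_{m-k}(K)$ is linear with $\partial_{m,k}([v_{\eta(0)},\dots,v_{\eta(m)}])=\sum_{J}\operatorname{sign}(\eta)\operatorname{sign}(\epsilon_J)[v_0,\dots,\widehat{v_{j_1}},\dots,\widehat{v_{j_k}},\dots,v_m]$,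 summing over subsets $J=\{j_1<\dots<j_k\}\subseteq\{0,\dots,m\}$ (hatted vertices removed, others in increasing order), $\epsilon_J$ the permutation of $\{0,\dots,m\}$ with $r\mapsto j_{r+1}$ for $r<k$ and $k,\dots,m$ mapped increasingly onto the complement of $J$. In particular $\partial_{m,0}$ is the identity, and the entry $b^{(m,k)}_{ij}$ is $\pm1$ if the $i$-th $(m-k)$-simplex is a face of the $j$-th $m$-simplex and $0$ otherwise. $p$-lower adjacency: two simplices are $p$-lower adjacent if they have a common $p$-face. The $p$-lower degree $\deg_L^p(\sigma^{(q)})$ is the number of simplices of $K$ (of any dimension), other than $\sigma^{(q)}$ itself, that are $p$-lower adjacent to $\sigma^{(q)}$ (a simplex is not considered $p$-lower adjacent to itself). *)

(* Defs.v *)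
From mathcomp Require Import all_boot all_order all_algebra.
Set Implicit Arguments. Unset Strict Implicit. Unset Printing Implicit Defensive.
Import Order.TTheory GRing.Theory Num.Theory.

Definition is_complex (V : finType) (K : {set {set V}}) : Prop :=
  (forall s : {set V}, s \in K -> s != set0) /\
  (forall s t : {set V}, s \in K -> t \subset s -> t != set0 -> t \in K).

Definition simplices (V : finType) (K : {set {set V}}) (q : nat) : {set {set V}} :=
  [set s in K | #|s| == q.+1].

Definition dimK (V : finType) (K : {set {set V}}) : nat :=
  \max_(s in K) #|s|.-1.

(* An orientation: for each simplex, a fixed ordering of its vertices. *)
Definition is_orientation (V : finType) (K : {set {set V}}) (o : {set V} -> seq V) : Prop :=
  forall s : {set V}, s \in K -> perm_eq (o s) (enum s).

(* Number of inversions of a sequence of naturals (one-line notation of a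
   permutation); the sign of the permutation is (-1)^inversions. *)
Definition inversions (s : seq nat) : nat :=
  \sum_(i < size s) \sum_(j < size s | i < j) (nth 0 s j < nth 0 s i).

Definition sgn_seq (s : seq nat) : int := (-1) ^+ inversions s.

(* The permutation eps_J in one-line notation: j_1,...,j_k followed by the
   complement of J in {0..m} in increasing order. *)
Definition eps_seq (m : nat) (J : {set 'I_m.+1}) : seq nat :=
  [seq val j | j <- enum J] ++ [seq val j | j <- enum (~: J)].

Definition remove_pos (V : eqType) (w : seq V) (J : seq nat) : seq V :=
  mask [seq (i \notin J) | i <- iota 0 (size w)] w.

(* Coefficient of the (fixed-orientation) simplex tau in the oriented
   simplex [w]: sign(eta) if w = [v_eta(0),...] with (v_0,...) = o tau. *)
Definition orient_coef (V : finType) (o : {set V} -> seq V) (w : seq V) (tau : {set V}) : int :=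
  if [set x in w] == tau then sgn_seq [seq index x (o tau) | x <- w] else 0.

(* b^{(m,k)}_{tau sigma}: coefficient of tau in the multi-parameter boundary
   d_{m,k}(sigma) of the m-simplex sigma (with its fixed orientation o sigma). *)
Definition bnd (V : finType) (o : {set V} -> seq V) (m k : nat)
    (tau sigma : {set V}) : int :=
  \sum_(J : {set 'I_m.+1} | #|J| == k)
     sgn_seq (eps_seq J) *
     orient_coef o (remove_pos (o sigma) [seq val j | j <- enum J]) tau.

Definition lower_adj (V : finType) (K : {set {set V}}) (p : nat) (s t : {set V}) : bool :=
  [exists f in simplices K p, (f \subset s) && (f \subset t)].

Definition lower_deg (V : finType) (K : {set {set V}}) (p : nat) (sigma : {set V}) : nat :=
  #|[set t in K | (t != sigma) && lower_adj K p sigma t]|.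

(* Main.v *)
Require Import Defs.
From mathcomp Require Import all_boot all_order all_algebra.
Import Order.TTheory GRing.Theory Num.Theory.
Set Implicit Arguments. Unset Strict Implicit. Unset Printing Implicit Defensive.
Local Open Scope ring_scope.

Lemma remove_pos_eq (V : eqType) (x0 : V) (w : seq V) (J : seq nat) :
  remove_pos w J = [seq nth x0 w i | i <- iota 0 (size w) & i \notin J].
Proof.
by rewrite /remove_pos -{2}(mkseq_nth x0 w) /mkseq -map_mask -filter_mask.
Qed.

Lemma mem_valJ n (J : {set 'I_n}) (i : 'I_n) :
  (val i \in [seq val j | j <- enum J]) = (i \in J).
Proof. by rewrite (mem_map val_inj) mem_enum. Qed.

Lemma mem_rp (V : eqType) (x0 : V) n (w : seq V) (J : {set 'I_n}) x :
  size w = n ->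
  (x \in remove_pos w [seq val j | j <- enum J]) =
  [exists i : 'I_n, (i \notin J) && (x == nth x0 w i)].
Proof.
move=> Hs; rewrite (remove_pos_eq x0); apply/mapP/existsP.
- case=> i; rewrite mem_filter mem_iota add0n Hs => /andP[Hi Hlt] ->.
  exists (Ordinal Hlt); rewrite eqxx andbT -mem_valJ //.
- case=> i /andP[HiJ /eqP ->]; exists (val i) => //.
  by rewrite mem_filter mem_iota add0n Hs ltn_ord mem_valJ HiJ.
Qed.

Lemma sgn_norm s : `|sgn_seq s| = 1.
Proof. by rewrite /sgn_seq normrX normrN1 expr1n. Qed.

Lemma bnd_abs (V : finType) (K : {set {set V}}) (o : {set V} -> seq V)
  (m k : nat) (tau sigma : {set V}) :
  is_orientation K o -> sigma \in K -> #|sigma| = m.+1 -> (#|tau| + k = m.+1)%N ->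
  `|bnd o m k tau sigma| = (tau \subset sigma)%:R.
Proof.
move=> Ho HsK Hcs Hct.
have Hp := Ho _ HsK.
set w := o sigma.
have Hsz : size w = m.+1 by rewrite (perm_size Hp) -cardE.
have Hu : uniq w by rewrite (perm_uniq Hp) enum_uniq.
have Hmem : forall x, (x \in w) = (x \in sigma) by move=> x; rewrite (perm_mem Hp) mem_enum.
have [x0 _] : exists x0 : V, true.
  have : (0 < #|sigma|)%N by rewrite Hcs.
  by case/card_gt0P => x _; exists x.
have Hinj : injective (fun i : 'I_m.+1 => nth x0 w i).
  move=> i j /eqP; rewrite nth_uniq ?Hsz ?ltn_ord // => /eqP; apply: val_inj.
have Hmemw : forall i : 'I_m.+1, nth x0 w i \in sigma.
  by move=> i; rewrite -Hmem mem_nth // Hsz ltn_ord.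
case: (boolP (tau \subset sigma)) => Hsub; last first.
  rewrite /bnd big1 ?normr0 // => J _.
  rewrite /orient_coef; case: ifP; last by rewrite mulr0.
  move/eqP=> HS; exfalso; move/negP: Hsub; apply; apply/subsetP => x.
  rewrite -HS inE (mem_rp x0 _ _ Hsz) => /existsP[i /andP[_ /eqP ->]].
  exact: Hmemw.
set J0 := [set i : 'I_m.+1 | nth x0 w i \notin tau].
have Himg : tau = [set nth x0 w i | i : 'I_m.+1 in ~: J0].
  apply/setP => x; apply/idP/imsetP.
  - move=> Hx; have : x \in w by rewrite Hmem (subsetP Hsub).
    rewrite -index_mem Hsz => Hi; exists (Ordinal Hi); first by rewrite !inE negbK /= nth_index // Hmem (subsetP Hsub).
    by rewrite /= nth_index // Hmem (subsetP Hsub).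
  - by case=> i; rewrite !inE negbK => Hi ->.
have HS0 : [set x in remove_pos w [seq val j | j <- enum J0]] = tau.
  rewrite [RHS]Himg; apply/setP => x; rewrite inE (mem_rp x0 _ _ Hsz).
  apply/existsP/idP.
  - by case=> i /andP[Hi /eqP ->]; apply: imset_f; rewrite inE.
  - by case/imsetP=> i Hi ->; exists i; rewrite -in_setC Hi eqxx.
have HcJ0 : #|J0| = k.
  have := cardsC J0; rewrite card_ord.
  have -> : #|~: J0| = #|tau| by rewrite Himg card_imset.
  by move=> H; apply/eqP; rewrite -(eqn_add2r #|tau|) H addnC Hct.
rewrite /bnd (bigD1 J0) /=; last by rewrite HcJ0.
rewrite big1 ?addr0.
  by rewrite normrM sgn_norm /orient_coef HS0 eqxx sgn_norm mul1r.
move=> J /andP[_ HJ]; rewrite /orient_coef; case: ifP; last by rewrite mulr0.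
move/eqP=> HS; exfalso; move/negP: HJ; apply; apply/eqP/setP => i.
rewrite inE; case: (boolP (i \in J)) => HiJ.
- apply/esym/negP; rewrite -HS inE (mem_rp x0 _ _ Hsz) => /existsP[j /andP[Hj /eqP /Hinj Hij]].
  by rewrite -Hij HiJ in Hj.
- apply/esym; apply: negbF; rewrite -HS inE (mem_rp x0 _ _ Hsz); apply/existsP; exists i.
  by rewrite HiJ eqxx.
Qed.

Theorem theoremt (V : finType) (K : {set {set V}}) (o : {set V} -> seq V)
  (p q : nat) (sigma : {set V}) :
  is_complex K -> is_orientation K o -> (p <= q)%N ->
  sigma \in simplices K q ->
  (lower_deg K p sigma)%:Z =
    -1 + \sum_(p <= q' < (dimK K).+1)
           \sum_(kappa in simplices K q')
             Num.min 1 (\sum_(i in simplices K p)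
                          `|bnd o q (q - p) i sigma| * `|bnd o q' (q' - p) i kappa|).
Proof.
move=> [Hne Hcl] Ho Hpq; rewrite inE => /andP[HsK /eqP Hcs].
set N := (dimK K).+1.
set adj := lower_adj K p sigma.
have Hterm : forall q' kappa, (p <= q')%N -> kappa \in simplices K q' ->
    Num.min 1 (\sum_(i in simplices K p)
       `|bnd o q (q - p) i sigma| * `|bnd o q' (q' - p) i kappa|) = (adj kappa)%:R.
  move=> q' kappa Hpq' ; rewrite inE => /andP[HkK /eqP Hck].
  have E : forall i, i \in simplices K p ->
      `|bnd o q (q - p) i sigma| * `|bnd o q' (q' - p) i kappa|
      = ((i \subset sigma) && (i \subset kappa))%:R.
    move=> i; rewrite inE => /andP[_ /eqP Hci].
    rewrite (bnd_abs Ho HsK Hcs) ?(bnd_abs Ho HkK Hck) ?Hci; last 2 first.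
    - by rewrite addSn subnKC.
    - by rewrite addSn subnKC.
    by case: (i \subset sigma); case: (i \subset kappa); rewrite ?mulr1 ?mulr0 ?mul0r.
  rewrite (eq_bigr _ E).
  case: (boolP (adj kappa)) => Ha.
  - apply: min_l.
    case/existsP: Ha => f /andP[Hf Hff].
    rewrite (bigD1 f) //= Hff lerDl; apply: sumr_ge0 => i _; exact: ler0n.
  - rewrite big1 ?min_r // => i Hi.
    case: (boolP ((i \subset sigma) && (i \subset kappa))) => // Hii.
    by exfalso; move/negP: Ha; apply; apply/existsP; exists i; rewrite Hi.
rewrite (@eq_big_nat _ _ _ p N _ (fun q' => \sum_(kappa in simplices K q') (adj kappa)%:R)); last first.
  by move=> q' /andP[Hq' _]; apply: eq_bigr => kappa Hk; exact: Hterm.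
have HqN : (q < N)%N.
  have := @leq_bigmax_cond _ (mem K) (fun s : {set V} => #|s|.-1) _ HsK.
  by rewrite Hcs /= /N /dimK ltnS.
have Hadj_card : forall kappa, adj kappa -> (p.+1 <= #|kappa|)%N.
  move=> kappa /existsP[f /andP[Hf /andP[_ Hfk]]].
  move: Hf; rewrite inE => /andP[_ /eqP <-]; exact: subset_leq_card.
have Hself : adj sigma.
  apply/existsP; exists [set x in take p.+1 (enum sigma)].
  have Hsub : [set x in take p.+1 (enum sigma)] \subset sigma.
    by apply/subsetP => x; rewrite inE => /mem_take; rewrite mem_enum.
  have Hc : #|[set x in take p.+1 (enum sigma)]| = p.+1.
    rewrite cardsE; move/card_uniqP: (take_uniq p.+1 (enum_uniq (mem sigma))) => ->.
    by rewrite size_take -cardE Hcs ltnS; case: ltngtP Hpq => // ->.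
  rewrite Hsub inE Hc eqxx andbT /= andbT; apply: (Hcl _ _ HsK Hsub).
  by rewrite -card_gt0 Hc.
have Hlow : forall q', (q' < p)%N -> \sum_(kappa in simplices K q') (adj kappa)%:R = 0 :> int.
  move=> q' Hq'; apply: big1 => kappa; rewrite inE => /andP[_ /eqP Hck].
  case: (boolP (adj kappa)) => // /Hadj_card; rewrite Hck ltnS => H.
  by rewrite ltnNge H in Hq'.
have -> : \sum_(p <= i < N) \sum_(kappa in simplices K i) (adj kappa)%:R
     = \sum_(0 <= i < N) \sum_(kappa in simplices K i) (adj kappa)%:R :> int.
  rewrite (@big_cat_nat _ _ _ p 0 N) //=; last by apply: leq_trans Hpq (ltnW HqN).
  rewrite [X in _ = X + _]big_nat [X in _ = X + _]big1 ?add0r // => i /andP[_ Hi]; exact: Hlow.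
rewrite big_mkord.
have Hcard : forall kappa, kappa \in K -> (0 < #|kappa|)%N /\ (#|kappa|.-1 < N)%N.
  move=> kappa Hk; split; first by rewrite card_gt0 Hne.
  have := @leq_bigmax_cond _ (mem K) (fun s : {set V} => #|s|.-1) _ Hk.
  by rewrite /N /dimK ltnS.
have Hpart : \sum_(kappa in K) (adj kappa)%:R
    = \sum_(j < N) \sum_(kappa in simplices K j) (adj kappa)%:R :> int.
  rewrite (partition_big (fun kappa : {set V} => (inord #|kappa|.-1 : 'I_N)) xpredT) //.
  apply: eq_bigr => j _; apply: eq_bigl => kappa; rewrite inE.
  case: (boolP (kappa \in K)) => //= Hk.
  have [H0 H1] := Hcard _ Hk.
  rewrite -val_eqE /= inordK // -(eqn_add2r 1) !addn1 prednK //.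
rewrite -Hpart (bigD1 sigma) //= Hself.
have -> : \sum_(i in K | i != sigma) (adj i)%:R
    = \sum_(t in [set t in K | (t != sigma) && lower_adj K p sigma t]) (1 : int).
  rewrite big_mkcond [RHS]big_mkcond; apply: eq_bigr => t _; rewrite !inE.
  by rewrite /adj; case: (t \in K); case: (t != sigma); case: (lower_adj K p sigma t).
rewrite /lower_deg addrA addNr add0r. by rewrite sumr_const natz.
Qed.
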